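(* Let $X$ be a subshift over a finite alphabet such that (i) there is $N$ such that every right special factor $w$ of $\mathcal{L}(X)$ with $|w|\ge N$ admits a letter $c$ such that $wc$ is right special in $\mathcal{L}(X)$; and (ii) right special words are dense in $X$: for every $\mathbf{x}\in X$ and every $n$, some right special factor of $\mathcal{L}(X)$ has $\mathbf{x}[0,n-1]$ as a prefix. Then the winning shift $W(X)$ has infinite coding dimension.
   Context: Subshifts are one-sided closed shift-invariant subsets of $A^{\mathbb{N}}$; $\mathcal{L}(X)$ is the set of finite factors of elements of $X$. A word $w\in\mathcal{L}(X)$ is right special if $wa,wb\in\mathcal{L}(X)$ for two distinct letters $a,b$. Winning shift: for a choice sequence $\alpha=\alpha_0\alpha_1\cdots\in\{0,\dots,|A|-1\}^{\mathbb{N}}$, Alice and Bob play infinitely many rounds; in round $j$ Alice chooses $A_j\subseteq A$ with $|A_j|=\alpha_j+1$ and Bob chooses $a_j\in A_j$; Alice wins if $a_0a_1\cdots\in X$. $W(X)$ is the set of $\alpha$ for which Alice has a winning strategy. Infinite coding dimension: there is no $d$ with $\sum_i y_i\le d$ for all $\mathbf{y}\in W(X)$. *)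

(* Defs.v *)
From mathcomp Require Import all_boot.
Set Implicit Arguments. Unset Strict Implicit. Unset Printing Implicit Defensive.

Section Defs.
Variable A : finType.

Definition sequence := nat -> A.

Definition pref (x : sequence) (n : nat) : seq A := [seq x k | k <- iota 0 n].

Definition shift (x : sequence) : sequence := fun n => x n.+1.

(* X is closed in the product topology of A^N (A discrete):
   any sequence all of whose prefixes are prefixes of points of X lies in X *)
Definition seq_closed (X : sequence -> Prop) : Prop :=
  forall x, (forall n, exists y, X y /\ pref y n = pref x n) -> X x.

Definition subshift (X : sequence -> Prop) : Prop :=
  [/\ exists x, X x, seq_closed X & forall x, X x -> X (shift x)].

Definition in_lang (X : sequence -> Prop) (w : seq A) : Prop :=
  exists x i, X x /\ w = [seq x (i + k) | k <- iota 0 (size w)].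

Definition right_special (X : sequence -> Prop) (w : seq A) : Prop :=
  exists a b : A, a != b /\ in_lang X (rcons w a) /\ in_lang X (rcons w b).

(* Alice's strategies: given Bob's previous choices a_0 .. a_{j-1}, a set A_j *)
Definition strategy := seq A -> {set A}.

Definition legal_strategy (alpha : nat -> nat) (S : strategy) : Prop :=
  forall h : seq A, #|S h| = (alpha (size h)).+1.

Definition winning_strategy (X : sequence -> Prop) (S : strategy) : Prop :=
  forall a : sequence, (forall j, a j \in S (pref a j)) -> X a.

Definition winning_shift (X : sequence -> Prop) (alpha : nat -> nat) : Prop :=
  (forall j, alpha j < #|A|) /\
  exists S : strategy, legal_strategy alpha S /\ winning_strategy X S.

(* infinite coding dimension: there is no d with sum_i y_i <= d for all y in W(X);
   for nat-valued y, sum_i y_i <= d iff all partial sums are <= d *)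
Definition infinite_coding_dimension (X : sequence -> Prop) : Prop :=
  ~ exists d : nat, forall y, winning_shift X y ->
      forall n, \sum_(i < n) y i <= d.

End Defs.

(* Main.v *)
Require Import Defs.
From mathcomp Require Import all_boot.
From Stdlib Require Import ClassicalEpsilon Lia.
From mathcomp Require Import zify.

Definition chooseP {T : Type} (P : T -> Prop) (d : T) : T :=
  match excluded_middle_informative (exists x, P x) with
  | left H => proj1_sig (constructive_indefinite_description _ H)
  | right _ => d end.

Lemma chooseP_spec T (P : T -> Prop) d : (exists x, P x) -> P (chooseP P d).
Proof.
rewrite /chooseP; case: excluded_middle_informative => // H _.
exact: proj2_sig (constructive_indefinite_description _ H).
Qed.

Lemma chooseP_or T (P : T -> Prop) d : P (chooseP P d) \/ chooseP P d = d.
Proof.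
rewrite /chooseP; case: excluded_middle_informative => H; last by right.
left; exact: proj2_sig (constructive_indefinite_description _ H).
Qed.

Lemma size_pref (A : finType) (x : sequence A) n : size (pref x n) = n.
Proof. by rewrite /pref size_map size_iota. Qed.

Lemma pref_add (A : finType) (x : sequence A) n m :
  pref x (n + m) = pref x n ++ [seq x k | k <- iota n m].
Proof. by rewrite /pref iotaD map_cat. Qed.

Lemma pref_S (A : finType) (x : sequence A) n : pref x n.+1 = rcons (pref x n) (x n).
Proof. by rewrite -addn1 pref_add /= cats1. Qed.

Lemma iter_shift (A : finType) i (x : sequence A) k : iter i (@shift A) x k = x (i + k).
Proof. by elim: i k => [|i IH] k //=; rewrite /shift IH addSnnS. Qed.

Lemma lang_point (A : finType) (X : sequence A -> Prop) w :
  subshift X -> in_lang X w <-> exists y, X y /\ pref y (size w) = w.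
Proof.
case=> _ _ Hs; split.
  case=> x [i [Xx ->]]; exists (iter i (@shift A) x); split.
    by elim: i {Xx} x (Xx) => //= i IH x Xx; apply: Hs; apply: IH.
  rewrite size_map size_iota /pref; apply: eq_map => k; exact: iter_shift.
case=> y [Xy Hy]; exists y, 0; split => //.
Qed.

Lemma lang_prefix (A : finType) (X : sequence A -> Prop) h v :
  subshift X -> in_lang X (h ++ v) -> in_lang X h.
Proof.
move=> sX /(lang_point _ _ _ sX) [y [Xy Hy]]; apply/(lang_point _ _ _ sX); exists y; split => //.
move: Hy; rewrite size_cat pref_add => /eqP; rewrite eqseq_cat ?size_pref //.
by case/andP => /eqP.
Qed.

Lemma rs_lang (A : finType) (X : sequence A -> Prop) w :
  subshift X -> right_special X w -> in_lang X w.
Proof.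
move=> sX [a [b [_ [H _]]]]; move: H; rewrite -cats1; exact: lang_prefix.
Qed.

Lemma rs_extend (A : finType) (X : sequence A -> Prop) N :
  (forall w : seq A, right_special X w -> N <= size w ->
      exists c : A, right_special X (rcons w c)) ->
  forall w, right_special X w -> N <= size w ->
  forall m, exists v, size v = m /\ right_special X (w ++ v).
Proof.
move=> HN w Hw Nw; elim=> [|m [v [Hv Rv]]]; first by exists [::]; rewrite cats0.
have [c Hc] := HN _ Rv (leq_trans Nw (leq_trans (leq_addr _ _) (eq_leq (esym (size_cat w v))))).

by exists (rcons v c); rewrite size_rcons Hv -rcons_cat.
Qed.

Definition Qext (A : finType) (X : sequence A -> Prop) (h : seq A) m :=
  in_lang X h -> forall m', m <= m' -> exists v, size v = m' /\ right_special X (h ++ v).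

Lemma point_ext (A : finType) (X : sequence A -> Prop) N :
  subshift X ->
  (forall w : seq A, right_special X w -> N <= size w ->
      exists c : A, right_special X (rcons w c)) ->
  (forall x : sequence A, X x -> forall n : nat,
      exists w : seq A, right_special X w /\ exists u, w = pref x n ++ u) ->
  forall h, exists m, Qext A X h m.
Proof.
move=> sX HN Hd h; case: (classic (in_lang X h)) => Hh; last first.
  by exists 0.
have [y [Xy Hy]] := (proj1 (lang_point _ _ _ sX) Hh).
have [w [Rw [u Hw]]] := Hd y Xy (size h + N).
exists (size w - size h) => _ m' Hm'.
have Nw : N <= size w by rewrite Hw size_cat size_pref; lia.
have [v [Hv Rv]] := rs_extend _ _ _ HN _ Rw Nw (m' - (size w - size h)).
exists (drop (size h) w ++ v); split.
  rewrite size_cat size_drop Hv subnKC //.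
have Eh : take (size h) w = h.
  by rewrite Hw pref_add -catA take_cat size_pref ltnn subnn take0 cats0 Hy.
by rewrite catA -{1}Eh cat_take_drop.
Qed.

Lemma Qext_up (A : finType) (X : sequence A -> Prop) h m m' :
  m <= m' -> Qext A X h m -> Qext A X h m'.
Proof. by move=> Hm H Hh k Hk; apply: H => //; apply: leq_trans Hk. Qed.

Lemma uniform_ext (A : finType) (X : sequence A -> Prop) :
  (forall h, exists m, Qext A X h m) ->
  forall n, exists m, forall h, size h = n -> Qext A X h m.
Proof.
move=> H n.
suff [m Hm] : exists m, forall t : n.-tuple A, t \in enum {: n.-tuple A} -> Qext A X t m.
  exists m => h Hh; have Hh' : size h == n by apply/eqP.
  by apply: (Hm (Tuple Hh')); rewrite mem_enum.
elim: (enum _) => [|t s [m Hm]]; first by exists 0.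
have [m1 H1] := H t.
exists (maxn m m1) => t'; rewrite inE => /orP [/eqP ->|Ht'].
  by apply: Qext_up H1; rewrite leq_maxr.
by apply: Qext_up (Hm _ Ht'); rewrite leq_maxl.
Qed.

Fixpoint tseq (M : nat -> nat) (k : nat) : nat :=
  match k with 0 => M 0 | k.+1 => tseq M k + 1 + M (tseq M k + 1) end.

Lemma tseq_lt M k k' : k < k' -> tseq M k < tseq M k'.
Proof.
elim: k' => // k' IH; rewrite ltnS leq_eqVlt => /orP [/eqP ->|/IH H] /=; first lia.
lia.
Qed.

Lemma tseq_ltE M k k' : (tseq M k < tseq M k') = (k < k').
Proof.
apply/idP/idP; last exact: tseq_lt.
case: (ltngtP k k') => // [/(tseq_lt M) H1 H2|-> //]; first lia.
by rewrite ltnn.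
Qed.

Lemma tseq_leE M k k' : (tseq M k <= tseq M k') = (k <= k').
Proof. by rewrite leqNgt tseq_ltE -leqNgt. Qed.

Lemma tseq_ge M k : k <= tseq M k.
Proof. elim: k => //= k IH; lia. Qed.

Definition Inv {A : finType} (X : sequence A -> Prop) (t : nat -> nat) (h : seq A) :=
  in_lang X h /\ forall k, size h <= t k -> (k = 0 \/ t k.-1 < size h) ->
    exists v, size (h ++ v) = t k /\ right_special X (h ++ v).

Lemma inv_after {A : finType} (X : sequence A -> Prop) M h a k :
  (forall n h, size h = n -> Qext A X h (M n)) ->
  size h = tseq M k -> in_lang X (rcons h a) -> Inv X (tseq M) (rcons h a).
Proof.
move=> HM Hs Hl; split => // k'; rewrite size_rcons Hs => H1 H2.
have Hk : k' = k.+1.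
  have {}H1 : k < k' by rewrite -(tseq_ltE M); lia.
  case: H2 => [E|H2]; first by move: H1; rewrite E.
  have : k'.-1 <= k by rewrite -(tseq_leE M); lia.
  lia.
subst k'.
have Hsz : size (rcons h a) = tseq M k + 1 by rewrite size_rcons Hs addn1.
have [v [Hv Rv]] := HM (tseq M k + 1) (rcons h a) Hsz Hl
  (M (tseq M k + 1)) (leqnn _).
by exists v; split => //=; rewrite size_cat size_rcons Hs Hv addn1.
Qed.

Lemma inv_bin {A : finType} (X : sequence A -> Prop) M h k :
  subshift X ->
  (forall n h, size h = n -> Qext A X h (M n)) ->
  Inv X (tseq M) h -> size h = tseq M k ->
  exists a b, a != b /\ Inv X (tseq M) (rcons h a) /\ Inv X (tseq M) (rcons h b).
Proof.
move=> sX HM [Hl Hi] Hs.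
have [v [Hv Rv]] : exists v, size (h ++ v) = tseq M k /\ right_special X (h ++ v).
  apply: Hi; first by rewrite Hs.
  case: k Hs => [|k] Hs; [by left | right]; rewrite Hs; exact: tseq_lt.
have Ev : v = [::] by apply/nilP; rewrite /nilp -(eqn_add2l (size h)) addn0 -size_cat Hv Hs.
rewrite Ev cats0 in Rv; case: Rv => a [b [ab [Ha Hb]]].
exists a, b; split => //; split.
  exact: (inv_after _ _ _ _ _ HM Hs Ha).
exact: (inv_after _ _ _ _ _ HM Hs Hb).
Qed.

Lemma inv_un {A : finType} (X : sequence A -> Prop) M h :
  subshift X ->
  Inv X (tseq M) h -> (forall k, size h != tseq M k) ->
  exists c, Inv X (tseq M) (rcons h c).
Proof.
move=> sX [Hl Hi] Hne.
have exP : exists k, size h <= tseq M k by exists (size h); exact: tseq_ge.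
case: (ex_minnP exP) => k Pk mink.
have [v [Hv Rv]] : exists v, size (h ++ v) = tseq M k /\ right_special X (h ++ v).
  apply: Hi => //; case: k Pk mink => [|k] Pk mink; [by left | right].
  rewrite ltnNge; apply/negP => /mink; rewrite ltnn //.
case: v Hv Rv => [|c v] Hv Rv.
  by move: (Hne k); rewrite -Hv cats0 eqxx.
have Ec : h ++ c :: v = rcons h c ++ v by rewrite -cats1 -catA.
rewrite Ec in Hv Rv.
exists c; split; first exact: (lang_prefix _ _ _ _ sX (rs_lang _ _ _ sX Rv)).
move=> k'; rewrite size_rcons => H1 H2.
have kk' : k <= k' by apply: mink; lia.
have Hk : k' = k.
  case: H2 => [E|H2]; first by rewrite E in kk' *; lia.
  apply/eqP; rewrite eqn_leq kk' andbT leqNgt; apply/negP => Hlt.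
  have : tseq M k <= tseq M k'.-1 by rewrite tseq_leE; lia.
  have := Hne k; lia.
by subst k'; exists v.
Qed.

Lemma sum_mono (f : nat -> nat) m n : m <= n -> \sum_(i < m) f i <= \sum_(i < n) f i.
Proof.
elim: n => [|n IH]; first by rewrite leqn0 => /eqP ->.
rewrite leq_eqVlt => /orP [/eqP -> //|]; rewrite ltnS => /IH H.
by rewrite big_ord_recr /=; apply: leq_trans H (leq_addr _ _).
Qed.

Theorem mainTheorem7 (A : finType) (X : sequence A -> Prop) :
  subshift X ->
  (exists N : nat, forall w : seq A, right_special X w -> N <= size w ->
      exists c : A, right_special X (rcons w c)) ->
  (forall x : sequence A, X x -> forall n : nat,
      exists w : seq A, right_special X w /\ exists u, w = pref x n ++ u) ->
  infinite_coding_dimension X.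
Proof.
move=> sX [N HN] Hd.
have Hu := uniform_ext _ _ (point_ext _ _ _ sX HN Hd).
pose M := fun n => proj1_sig (constructive_indefinite_description _ (Hu n)).
have HM : forall n h, size h = n -> Qext A X h (M n).
  move=> n; exact: (proj2_sig (constructive_indefinite_description _ (Hu n))).
have [a0 [b0 ab0]] : exists a0 b0 : A, a0 != b0.
  case: sX => [[x Xx] _ _]; have [w [[a [b [ab _]]] _]] := Hd x Xx 0.
  by exists a, b.
have card2 : 2 <= #|A|.
  by have := subset_leq_card (subsetT [set a0; b0]); rewrite cardsT cards2 ab0.
pose t := tseq M.
pose ab := fun j => j \in [seq t k | k <- iota 0 j.+1].
pose alpha := fun j => nat_of_bool (ab j).
have ab_t : forall k, ab (t k).
  move=> k; apply: map_f; rewrite mem_iota /= ltnS; exact: tseq_ge.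
have ab_ex : forall j, ab j -> exists k, j = t k by move=> j /mapP [k _ ->]; exists k.
have ab_nex : forall j, ~~ ab j -> forall k, j != t k.
  by move=> j H k; apply: contra H => /eqP ->.
have Wn : winning_shift X alpha.
  split; first by move=> j; apply: leq_trans card2; rewrite /alpha; case: (ab j).
  pose pp := fun h => chooseP (fun p : A * A => p.1 != p.2 /\ Inv X t (rcons h p.1)
                                  /\ Inv X t (rcons h p.2)) (a0, b0).
  pose cc := fun h => chooseP (fun c => Inv X t (rcons h c)) a0.
  exists (fun h => if ab (size h) then [set (pp h).1; (pp h).2] else [set cc h]); split.
    move=> h; rewrite /alpha; case: (ab (size h)) => /=; last by rewrite cards1.
    rewrite cards2; case: (chooseP_or _ (fun p : A * A => p.1 != p.2 /\ Inv X t (rcons h p.1)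
                                  /\ Inv X t (rcons h p.2)) (a0, b0)) => [[-> _]|E] //.
    by rewrite /pp E ab0.
  move=> a Ha.
  have Hinv : forall j, Inv X t (pref a j).
    elim=> [|j IH].
      have Hl : in_lang X [::].
        by case: sX => [[x Xx] _ _]; exists x, 0; split.
      split => // k _ [->|//]; have := HM 0 [::] erefl Hl (M 0) (leqnn _).
      by case=> v [Hv Rv]; exists v.
    rewrite pref_S; move: (Ha j); case E: (ab j) => Hj.
      have [k Ek] := ab_ex _ E.
      have Hs : size (pref a j) = tseq M k by rewrite size_pref.
      have [b1 [b2 Hb]] := inv_bin _ _ _ _ sX HM IH Hs.
      have := chooseP_spec _ (fun p : A * A => p.1 != p.2 /\ Inv X t (rcons (pref a j) p.1)
                                  /\ Inv X t (rcons (pref a j) p.2)) (a0, b0)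
        (ex_intro _ (b1, b2) Hb).
      rewrite size_pref E in Hj.
      by case=> _ [H1 H2]; case/set2P: Hj => ->.
    rewrite size_pref E in Hj.
    have Hne : forall k, size (pref a j) != tseq M k.
      by rewrite size_pref; apply: ab_nex; rewrite E.
    have [c Hc] := inv_un _ _ _ sX IH Hne.
    have := chooseP_spec _ (fun c => Inv X t (rcons (pref a j) c)) a0 (ex_intro _ c Hc).
    by move/set1P: Hj => ->.
  have [_ Hcl _] := sX; apply: Hcl => n.
  case: (Hinv n) => Hl _; have [y [Xy Hy]] := proj1 (lang_point _ _ _ sX) Hl.
  by exists y; rewrite size_pref in Hy.
case=> d Hdb.
have Hsum : forall k, k.+1 <= \sum_(i < (t k).+1) alpha i.
  elim=> [|k IH]; first by rewrite big_ord_recr /= /alpha ab_t; lia.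
  rewrite big_ord_recr /= /alpha ab_t /=.
  apply: leq_trans (_ : (\sum_(i < (t k).+1) alpha i).+1 <= _); first by [].
  rewrite addn1 ltnS; apply: sum_mono; rewrite /t /=; lia.
have := Hdb alpha Wn (t d).+1; have := Hsum d; lia.
Qed.
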